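(* For every $n\geq 3$, the formula $\delta(n)$ is not a theorem of ${\bf T45m}$.
   Context: Formulas are built from a denumerable set of propositional variables $p_1,p_2,\ldots$ by the unary connectives $\neg$, $\Box$ and the binary connective $\to$; $For$ is the set of all formulas. Abbreviations: $\Diamond\alpha:=\neg\Box\neg\alpha$, $\alpha\vee\beta:=\neg\alpha\to\beta$. For formulas $\alpha_1,\ldots,\alpha_k$ ($k\ge 2$), $\bigvee\{\alpha_1,\ldots,\alpha_k\}:=((\ldots((\alpha_1\vee\alpha_2)\vee\alpha_3)\vee\ldots)\vee\alpha_k)$. For $n\geq 3$: $\alpha(n)=\bigvee\{p_j: 1\le j\le n\}$, $\beta_i(n)=\bigvee\{p_j:1\le j\le n,\ j\ne i\}$ for $1\le i\le n$, and $\delta(n)=\bigvee\{\Box\alpha(n)\to\Box\beta_i(n): 1\le i\le n\}$. ${\bf T45m}$ is the Hilbert calculus whose axioms are all instances (over $For$) of the axiom schemas of a standard Hilbert calculus for classical propositional logic in the signature $\{\neg,\to\}$, plus all instances of: (K) $\Box(\alpha\to\beta)\to(\Box\alpha\to\Box\beta)$; (K1) $\Box(\alpha\to\beta)\to(\Diamond\alpha\to\Diamond\beta)$; (K2) $\Diamond(\alpha\to\beta)\to(\Box\alpha\to\Diamond\beta)$; (M1) $\neg\Diamond\alpha\to\Box(\alpha\to\beta)$; (M2) $\Box\beta\to\Box(\alpha\to\beta)$; (M3) $\Diamond\beta\to\Diamond(\alpha\to\beta)$; (M4) $\Diamond\neg\alpha\to\Diamond(\alpha\to\beta)$; (T) $\Box\alpha\to\alpha$;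 (DN1) $\Box\alpha\to\Box\neg\neg\alpha$; (DN2) $\Box\neg\neg\alpha\to\Box\alpha$; (4) $\Box\alpha\to\Box\Box\alpha$; (5) $\Diamond\Box\alpha\to\Box\alpha$; modus ponens is the only rule. *)

(* Defs.v *)
From Stdlib Require Import List Arith.
Import ListNotations.

(* Formulas over variables p_1, p_2, ... ; [Var j] is p_j (index 0 unused
   by the statement). Connectives: negation, box, implication. *)
Inductive form : Type :=
| Var : nat -> form
| Neg : form -> form
| Box : form -> form
| Imp : form -> form -> form.

Definition Dia (a : form) : form := Neg (Box (Neg a)).
Definition Or (a b : form) : form := Imp (Neg a) b.

Definition bigvee (l : list form) : form :=
  match l with
  | [] => Var 0 (* never used: all lists below are nonempty, of length >= 2 *)
  | a :: l' => fold_left Or l' a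
  end.

Definition alpha (n : nat) : form := bigvee (map Var (seq 1 n)).

Definition beta (n i : nat) : form :=
  bigvee (map Var (filter (fun j => negb (Nat.eqb j i)) (seq 1 n))).

Definition delta (n : nat) : form :=
  bigvee (map (fun i => Imp (Box (alpha n)) (Box (beta n i))) (seq 1 n)).

(* The Hilbert calculus T45m.  Classical propositional part: the standard
   (Lukasiewicz/Mendelson) axiom schemes for {neg, ->}. *)
Inductive T45m : form -> Prop :=
| ax_P1 a b : T45m (Imp a (Imp b a))
| ax_P2 a b c : T45m (Imp (Imp a (Imp b c)) (Imp (Imp a b) (Imp a c)))
| ax_P3 a b : T45m (Imp (Imp (Neg a) (Neg b)) (Imp b a))
| ax_K a b : T45m (Imp (Box (Imp a b)) (Imp (Box a) (Box b)))
| ax_K1 a b : T45m (Imp (Box (Imp a b)) (Imp (Dia a) (Dia b)))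
| ax_K2 a b : T45m (Imp (Dia (Imp a b)) (Imp (Box a) (Dia b)))
| ax_M1 a b : T45m (Imp (Neg (Dia a)) (Box (Imp a b)))
| ax_M2 a b : T45m (Imp (Box b) (Box (Imp a b)))
| ax_M3 a b : T45m (Imp (Dia b) (Dia (Imp a b)))
| ax_M4 a b : T45m (Imp (Dia (Neg a)) (Dia (Imp a b)))
| ax_T a : T45m (Imp (Box a) a)
| ax_DN1 a : T45m (Imp (Box a) (Box (Neg (Neg a))))
| ax_DN2 a : T45m (Imp (Box (Neg (Neg a))) (Box a))
| ax_4 a : T45m (Imp (Box a) (Box (Box a)))
| ax_5 a : T45m (Imp (Dia (Box a)) (Box a))
| rule_MP a b : T45m a -> T45m (Imp a b) -> T45m b.

(* Main.v *)
Require Import Defs.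
From Stdlib Require Import List Arith Lia Classical.
Import ListNotations.

Section Model.
Variable n : nat.

Fixpoint ev (w : nat) (f : form) : Prop :=
  match f with
  | Var j => j = S (w mod n)
  | Neg a => ~ ev w a
  | Box a => forall w', ev w' a
  | Imp a b => ev w a -> ev w b
  end.

Lemma sound : forall f, T45m f -> forall w, ev w f.
Proof.
  induction 1; simpl; intros; try tauto.
  all: try (apply NNPP; intro; firstorder fail).
  all: try (firstorder fail).
Qed.

Lemma ev_fold : forall w l a, ev w (fold_left Or l a) <-> (ev w a \/ exists x, In x l /\ ev w x).
Proof.
  intros w l; induction l as [|b l IH]; intros a; simpl.
  - firstorder.
  - rewrite IH; simpl. split.
    + intros [H|[x [Hx H]]]; [|eauto].
      destruct (classic (ev w a)); [auto|]. right; exists b; auto.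
    + intros [H|[x [[<-|Hx] H]]]; [left; tauto|left; tauto|right; eauto].
Qed.

Lemma ev_bigvee : forall w l, l <> [] -> (ev w (bigvee l) <-> exists x, In x l /\ ev w x).
Proof.
  intros w [|a l] Hl; [congruence|]. unfold bigvee. rewrite ev_fold. simpl. firstorder congruence.
Qed.
End Model.

Theorem mainTheorem14 : forall n : nat, 3 <= n -> ~ T45m (delta n).
Proof.
  intros n Hn H. pose proof (sound n _ H 0) as E.
  unfold delta in E. rewrite ev_bigvee in E.
  2:{ destruct n; [lia|discriminate]. }
  destruct E as [x [Hx E]]. apply in_map_iff in Hx. destruct Hx as [i [<- Hi]].
  apply in_seq in Hi. simpl in E.
  assert (HA : forall w, ev n w (alpha n)).
  { intro w. unfold alpha. rewrite ev_bigvee by (destruct n; [lia|discriminate]).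
    exists (Var (S (w mod n))). split; [|reflexivity].
    apply in_map. apply in_seq. pose proof (Nat.mod_upper_bound w n). lia. }
  specialize (E HA (i - 1)). unfold beta in E.
  assert (Hm : (i - 1) mod n = i - 1) by (apply Nat.mod_small; lia).
  rewrite ev_bigvee in E.
  - destruct E as [y [Hy E]]. apply in_map_iff in Hy. destruct Hy as [j [<- Hj]].
    apply filter_In in Hj. destruct Hj as [_ Hj]. simpl in E. rewrite Hm in E.
    apply Bool.negb_true_iff, Nat.eqb_neq in Hj. lia.
  - intro C. apply map_eq_nil in C.
    assert (In (if Nat.eqb i 1 then 2 else 1) (filter (fun j => negb (Nat.eqb j i)) (seq 1 n))).
    { apply filter_In. split. apply in_seq. destruct (Nat.eqb i 1); lia.
      destruct (Nat.eqb i 1) eqn:E1; apply Bool.negb_true_iff, Nat.eqb_neq;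
      apply Nat.eqb_eq in E1 || apply Nat.eqb_neq in E1; lia. }
    rewrite C in H0. contradiction.
Qed.
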